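(* Let $\theta>1$ be real with $\log\theta=p/q>1$ rational, where $p,q$ are positive integers. Then $\mathcal A_\theta\subseteq [1,\frac{p^2}{6q})$; in particular $\mathcal A_\theta$ is finite.
   Context: $\lfloor x\rfloor$ is the floor of $x$; $\log$ is the natural logarithm. For real $\theta>1$ and positive integer $n$, $M'_\theta(n)=\left\lfloor 1/(\theta^{1/n}-1)\right\rfloor$, and $\mathcal A_\theta=\{n\in\mathbb N: M'_\theta(n)\neq \lfloor n/\log\theta-1/2\rfloor\}$, where $\mathbb N$ is the set of positive integers. *)

(* Defs.v *)
From Stdlib Require Import Reals ZArith.
Open Scope R_scope.

(* floor of a real number: up x is the unique integer with x < up x <= x + 1,
   so up x - 1 is the greatest integer <= x. *)
Definition Rfloor (x : R) : Z := (up x - 1)%Z.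

Definition Mprime (theta : R) (n : nat) : Z :=
  Rfloor (1 / (Rpower theta (1 / INR n) - 1)).

Definition in_A (theta : R) (n : nat) : Prop :=
  (1 <= n)%nat /\ Mprime theta n <> Rfloor (INR n / ln theta - 1 / 2).

(* Main.v *)
Require Import Defs.
From Stdlib Require Import Reals ZArith Lra Lia Psatz.
From Coquelicot Require Import Coquelicot.
Open Scope R_scope.
Lemma pade_up (x : R) : 0 < x ->
  x^2 + 6*x + 12 < exp x * (x^2 - 6*x + 12).
Proof.
  intros Hx.
  set (g := fun t => ln (t^2 + 6*t + 12) - ln (t^2 - 6*t + 12) - t).
  set (g' := fun t => - t^4 / ((t^2 + 6*t + 12) * (t^2 - 6*t + 12))).
  destruct (MVT_cor2 g g' 0 x Hx) as [c [Hc Hc2]].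
  { intros c Hc. apply is_derive_Reals. unfold g, g'.
    assert (H1 : 0 < c^2 + 6*c + 12) by nra.
    assert (H2 : 0 < c^2 - 6*c + 12) by (assert (0 <= (c-3)^2) by apply pow2_ge_0; nra).
    auto_derive. { repeat split; lra. }
    field. lra. }
  assert (H1 : 0 < c^2 + 6*c + 12) by nra.
  assert (H2 : 0 < c^2 - 6*c + 12) by (assert (0 <= (c-3)^2) by apply pow2_ge_0; nra).
  assert (Hg' : g' c < 0).
  { unfold g'. unfold Rdiv. rewrite Ropp_mult_distr_l_reverse.
    apply Ropp_lt_gt_0_contravar. apply Rmult_gt_0_compat.
    apply pow_lt; lra. apply Rinv_0_lt_compat. nra. }
  assert (Hg0 : g 0 = 0).
  { unfold g. replace (0^2 + 6*0 + 12) with (0^2 - 6*0 + 12) by ring. ring. }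
  assert (Hgx : g x < 0) by nra.
  unfold g in Hgx.
  assert (A1 : 0 < x^2 + 6*x + 12) by nra.
  assert (A2 : 0 < x^2 - 6*x + 12) by (assert (0 <= (x-3)^2) by apply pow2_ge_0; nra).
  rewrite <- ln_div in Hgx by lra.
  assert (Hl : ln ((x^2 + 6*x + 12)/(x^2 - 6*x + 12)) < x) by lra.
  apply exp_increasing in Hl. rewrite exp_ln in Hl.
  2:{ apply Rdiv_lt_0_compat; lra. }
  apply (Rmult_lt_compat_r (x^2 - 6*x + 12)) in Hl; [|lra].
  unfold Rdiv in Hl. rewrite Rmult_assoc, Rinv_l, Rmult_1_r in Hl; lra.
Qed.

Lemma pade_low (x : R) : 0 < x ->
  exp x * (2 - x) <= 2 + x.
Proof.
  intros Hx. destruct (Rle_or_lt 2 x) as [H|H].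
  { assert (0 < exp x) by apply exp_pos. nra. }
  set (g := fun t => ln (2 + t) - ln (2 - t) - t).
  set (g' := fun t => t^2 / ((2 + t) * (2 - t))).
  destruct (MVT_cor2 g g' 0 x Hx) as [c [Hc Hc2]].
  { intros c Hc. apply is_derive_Reals. unfold g, g'.
    auto_derive. { repeat split; lra. }
    field. lra. }
  assert (Hg' : 0 < g' c).
  { unfold g'. apply Rdiv_lt_0_compat. nra. nra. }
  assert (Hg0 : g 0 = 0).
  { unfold g. replace (2 - 0) with (2 + 0) by ring. ring. }
  assert (Hgx : 0 < g x) by nra.
  unfold g in Hgx.
  rewrite <- ln_div in Hgx by lra.
  assert (Hl : x < ln ((2 + x)/(2 - x))) by lra.
  apply exp_increasing in Hl. rewrite exp_ln in Hl.
  2:{ apply Rdiv_lt_0_compat; lra. }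
  apply (Rmult_lt_compat_r (2 - x)) in Hl; [|lra].
  unfold Rdiv in Hl. rewrite Rmult_assoc, Rinv_l, Rmult_1_r in Hl; lra.
Qed.
Lemma low_b x E : 0 < x -> 1 < E -> E * (2 - x) <= 2 + x -> 1/x - 1/2 <= 1/(E - 1).
Proof.
  intros Hx HE H.
  assert (Hy : (1/(E-1)) * (E-1) = 1) by (field; lra).
  assert (Hz : (1/x) * x = 1) by (field; lra).
  assert (0 < 1/(E-1)) by (apply Rdiv_lt_0_compat; lra).
  assert (0 < 1/x) by (apply Rdiv_lt_0_compat; lra).
  set (y := 1/(E-1)) in *. set (z := 1/x) in *.
  assert (H2 : 2 - x <= 2*x*y).
  { assert (y * ((E-1)*(2-x)) <= y * (2*x)) by (apply Rmult_le_compat_l; lra). nra. }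
  assert (z * (2-x) <= z * (2*x*y)) by (apply Rmult_le_compat_l; lra). nra.
Qed.
Lemma up_b x E : 0 < x -> 1 < E -> x^2 + 6*x + 12 < E * (x^2 - 6*x + 12) ->
  1/(E - 1) < 1/x - 1/2 + x/12.
Proof.
  intros Hx HE H.
  assert (Hy : (1/(E-1)) * (E-1) = 1) by (field; lra).
  assert (Hz : (1/x) * x = 1) by (field; lra).
  assert (0 < 1/(E-1)) by (apply Rdiv_lt_0_compat; lra).
  assert (0 < 1/x) by (apply Rdiv_lt_0_compat; lra).
  set (y := 1/(E-1)) in *. set (z := 1/x) in *.
  assert (H2 : 12*x*y < x^2 - 6*x + 12).
  { assert (y * (12*x) < y * ((E-1)*(x^2 - 6*x + 12))) by (apply Rmult_lt_compat_l; lra). nra. }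
  assert (z * (12*x*y) < z * (x^2 - 6*x + 12)) by (apply Rmult_lt_compat_l; lra).
  replace (x/12) with (x * z * x / 12) by (rewrite (Rmult_comm x z), Hz; field).
  nra.
Qed.
Theorem theorem2 (theta : R) (p q : nat) :
  1 < theta ->
  (0 < p)%nat -> (0 < q)%nat ->
  ln theta = INR p / INR q ->
  1 < ln theta ->
  (forall n : nat, in_A theta n ->
     1 <= INR n /\ INR n < INR p ^ 2 / (6 * INR q))
  /\ (exists N : nat, forall n : nat, in_A theta n -> (n < N)%nat).
Proof.
  intros Hth Hp Hq HL HL1.
  assert (HP : 0 < INR p) by (apply lt_0_INR; lia).
  assert (HQ : 0 < INR q) by (apply lt_0_INR; lia).
  assert (main : forall n : nat, in_A theta n ->
     1 <= INR n /\ INR n < INR p ^ 2 / (6 * INR q)).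
  { intros n [Hn Hne].
    assert (HN1 : 1 <= INR n) by (replace 1 with (INR 1) by reflexivity; apply le_INR; lia).
    split; [exact HN1|].
    set (P := INR p) in *. set (Q := INR q) in *. set (N := INR n) in *.
    set (x := P / (Q * N)).
    assert (Hx : 0 < x) by (unfold x; apply Rdiv_lt_0_compat; nra).
    set (E := exp x).
    assert (HE : 1 < E) by (unfold E; rewrite <- exp_0; apply exp_increasing; lra).
    assert (HR : Rpower theta (1 / N) = E).
    { unfold Rpower, E, x. rewrite HL. f_equal. field. lra. }
    unfold Mprime in Hne. fold N in Hne. rewrite HR in Hne.
    set (a := 1 / (E - 1)) in *.
    set (b := N / ln theta - 1 / 2) in *.
    assert (Hb : b = 1/x - 1/2) by (unfold b, x; rewrite HL; field; lra).
    assert (Hba : b <= a) by (rewrite Hb; apply low_b; auto; unfold E; apply pade_low; auto).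
    assert (Hab : a < b + x/12) by (rewrite Hb; unfold a; apply up_b; auto; unfold E; apply pade_up; auto).
    assert (Hk : IZR (up b) <= a).
    { destruct (Rle_or_lt (IZR (up b)) a) as [H|H]; auto. exfalso. apply Hne.
      unfold Rfloor. f_equal. symmetry. apply tech_up; auto.
      destruct (archimed b). lra. }
    destruct (archimed b) as [Hk2 _].
    set (k := up b) in *.
    set (m := (2 * k * Z.of_nat p - 2 * Z.of_nat n * Z.of_nat q + Z.of_nat p)%Z).
    assert (Hm : IZR m = 2 * P * (IZR k - b)).
    { unfold m. rewrite plus_IZR, minus_IZR, !mult_IZR, <- !INR_IZR_INZ.
      fold P Q N. rewrite Hb. unfold x. field. lra. }
    assert (Hm0 : (0 < m)%Z) by (apply lt_0_IZR; rewrite Hm; nra).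
    assert (Hm1 : 1 <= IZR m) by (apply IZR_le; lia).
    assert (H1 : 1 < 2 * P * (x / 12)) by nra.
    unfold x in H1.
    apply (Rmult_lt_reg_r (6 * Q)); [lra|].
    replace (P ^ 2 / (6 * Q) * (6 * Q)) with (P^2) by (field; lra).
    replace (2 * P * (P / (Q * N) / 12)) with (P^2 / (6 * Q * N)) in H1 by (field; lra).
    apply (Rmult_lt_compat_r (6 * Q * N)) in H1; [|nra].
    replace (P ^ 2 / (6 * Q * N) * (6 * Q * N)) with (P^2) in H1 by (field; lra).
    lra. }
  split; [exact main|].
  exists (p * p)%nat. intros n Hn. destruct (main n Hn) as [_ H].
  apply INR_lt. rewrite mult_INR.
  assert (INR p ^ 2 / (6 * INR q) <= INR p ^ 2).
  { assert (1 <= INR q) by (replace 1 with (INR 1) by reflexivity; apply le_INR; lia).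
    unfold Rdiv. rewrite <- (Rmult_1_r (INR p ^ 2)) at 2.
    apply Rmult_le_compat_l; [nra|].
    rewrite <- Rinv_1. apply Rinv_le_contravar; lra. }
  nra.
Qed.
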